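(* There is a graph that contains every locally finite graph as an induced subgraph but contains no subdivision of $K_{\aleph_0}$.
   Context: All graphs are simple and countable. A graph is locally finite if every vertex has finite degree. *)

(* Defs.v *)
From Stdlib Require Import List.
Import ListNotations.

Record graph := Graph {
  vert : Type;
  adj : vert -> vert -> Prop;
  adj_sym : forall x y, adj x y -> adj y x;
  adj_irrefl : forall x, ~ adj x x;
  vert_countable : exists f : vert -> nat, forall x y, f x = f y -> x = y
}.

Definition locally_finite (G : graph) : Prop :=
  forall x : vert G, exists l : list (vert G), forall y, adj G x y -> In y l.

Definition induced_subgraph_of (H G : graph) : Prop :=
  exists f : vert H -> vert G,
    (forall x y, f x = f y -> x = y) /\
    (forall x y, adj H x y <-> adj G (f x) (f y)).

Fixpoint walk (G : graph) (x : vert G) (l : list (vert G)) (y : vert G) : Prop :=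
  match l with
  | [] => adj G x y
  | z :: l' => adj G x z /\ walk G z l' y
  end.

(* G contains (as a subgraph) a subdivision of K_aleph0: infinitely many
   distinct branch vertices b i, and for every pair i < j a path from b i
   to b j with interior vertices P i j, the paths being internally
   disjoint and avoiding the branch vertices in their interiors. *)
Definition has_TK_aleph0 (G : graph) : Prop :=
  exists (b : nat -> vert G) (P : nat -> nat -> list (vert G)),
    (forall i j, b i = b j -> i = j) /\
    (forall i j, i < j ->
        walk G (b i) (P i j) (b j) /\
        NoDup (b i :: P i j ++ [b j]) /\
        (forall v k, In v (P i j) -> v <> b k)) /\
    (forall i j i' j' v, i < j -> i' < j' -> (i, j) <> (i', j') ->
        In v (P i j) -> ~ In v (P i' j')).

(* Main.v *)
Require Import Defs.
From Stdlib Require Import List Arith Lia Cantor Classical ClassicalEpsilon Wf_nat.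
Import ListNotations.

Definition layer := ((nat * list (nat*nat)) * list (nat*nat))%type.
Definition V := (list layer * nat)%type.

Definition valid (u : V) : Prop :=
  match fst u with [] => False | L :: _ => snd u < fst (fst L) end.

Definition R (u v : V) : Prop :=
  match fst u with
  | [] => False
  | L :: rest => snd u < fst (fst L) /\
     ((fst v = fst u /\ snd v < fst (fst L) /\ In (snd u, snd v) (snd (fst L)))
      \/ (valid v /\ fst v = rest /\ In (snd u, snd v) (snd L)))
  end.

Definition adjG (u v : V) : Prop := u <> v /\ (R u v \/ R v u).

Lemma adjG_sym u v : adjG u v -> adjG v u.
Proof. unfold adjG; intros [H1 [H2|H2]]; split; auto. Qed.

Lemma adjG_irrefl u : ~ adjG u u.
Proof. unfold adjG; intros [H _]; auto. Qed.

Arguments to_nat : simpl never.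
Fixpoint enc_list {A} (e : A -> nat) (l : list A) : nat :=
  match l with [] => 0 | x :: l' => S (to_nat (e x, enc_list e l')) end.

Lemma to_nat_inj p q : to_nat p = to_nat q -> p = q.
Proof. intros H. rewrite <- (cancel_of_to p), <- (cancel_of_to q), H. reflexivity. Qed.

Lemma enc_list_inj {A} (e : A -> nat) : (forall x y, e x = e y -> x = y) ->
  forall l l', enc_list e l = enc_list e l' -> l = l'.
Proof.
  intros He l; induction l as [|x l IH]; intros [|y l'] H; simpl in H; try discriminate; auto.
  injection H; intros H'. apply to_nat_inj in H'. injection H'; intros H1 H2.
  rewrite (He _ _ H2), (IH _ H1). reflexivity.
Qed.

Definition enc_pair {A B} (ea : A -> nat) (eb : B -> nat) (p : A * B) : nat :=
  to_nat (ea (fst p), eb (snd p)).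

Lemma enc_pair_inj {A B} (ea : A -> nat) (eb : B -> nat) :
  (forall x y, ea x = ea y -> x = y) -> (forall x y, eb x = eb y -> x = y) ->
  forall p q, enc_pair ea eb p = enc_pair ea eb q -> p = q.
Proof.
  intros Ha Hb [a b] [c d] H; unfold enc_pair in H; simpl in H.
  apply to_nat_inj in H; injection H; intros; f_equal; auto.
Qed.

Definition encV : V -> nat :=
  enc_pair (enc_list (enc_pair (enc_pair (fun n => n) (enc_list (enc_pair (fun n => n) (fun n => n))))
                              (enc_list (enc_pair (fun n => n) (fun n => n))))) (fun n => n).

Lemma encV_inj : forall x y, encV x = encV y -> x = y.
Proof.
  assert (Hid : forall x y : nat, x = y -> x = y) by auto.
  assert (Hp := enc_pair_inj _ _ Hid Hid).
  assert (Hl := enc_list_inj _ Hp).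
  apply enc_pair_inj; auto.
  apply enc_list_inj. apply enc_pair_inj; auto. apply enc_pair_inj; auto.
Qed.

Definition G : graph := Graph V adjG adjG_sym adjG_irrefl (ex_intro _ encV encV_inj).

Definition le {A} (s t : list A) := exists p, t = p ++ s.

Lemma le_refl {A} (s : list A) : le s s. Proof. exists []; auto. Qed.
Lemma le_trans {A} (s t u : list A) : le s t -> le t u -> le s u.
Proof. intros [p ->] [q ->]. exists (q ++ p). rewrite app_assoc; auto. Qed.
Lemma le_tail {A} (x : A) t : le t (x :: t). Proof. exists [x]; auto. Qed.
Lemma le_comp {A} (s s' t : list A) : le s t -> le s' t -> le s s' \/ le s' s.
Proof.
  intros [p Hp] [q Hq]. rewrite Hp in Hq. apply app_eq_app in Hq.
  destruct Hq as [l [[H1 H2]|[H1 H2]]].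
  - left. exists l; auto.
  - right. exists l; auto.
Qed.
Lemma le_len_eq {A} (s t : list A) : le s t -> length s = length t -> s = t.
Proof.
  intros [p ->] H. rewrite length_app in H. destruct p; simpl in *; auto; lia.
Qed.
Lemma le_cons_inv {A} (s t : list A) l : le s (l :: t) -> s = l :: t \/ le s t.
Proof. intros [[|x p] H]; simpl in H; auto. right; injection H; intros; exists p; auto. Qed.

Lemma F1 u v : adjG u v -> fst u = fst v \/ (exists L, fst u = L :: fst v) \/ (exists L, fst v = L :: fst u).
Proof.
  unfold adjG, R; intros [_ [H|H]].
  - destruct (fst u) eqn:E; [contradiction|]. destruct H as [_ [[H _]|[_ [H _]]]].
    + left; auto.
    + right; left; exists l; subst; auto.
  - destruct (fst v) eqn:E; [contradiction|]. destruct H as [_ [[H _]|[_ [H _]]]].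
    + left; auto.
    + right; right; exists l; subst; auto.
Qed.

Lemma valid_adj u v : adjG u v -> valid u /\ valid v.
Proof.
  unfold adjG, R, valid; intros [_ [H|H]].
  - destruct (fst u) eqn:E; [contradiction|]. destruct H as [H1 [[H H2]|[H H2]]]; split; auto.
    rewrite H; tauto.
  - destruct (fst v) eqn:E; [contradiction|]. destruct H as [H1 [[H H2]|[H H2]]]; split; auto.
    rewrite H; tauto.
Qed.

Lemma walk_valid x l y : walk G x l y -> forall z, In z (x :: l ++ [y]) -> valid z.
Proof.
  revert x; induction l as [|w l IH]; intros x Hw z Hz; simpl in *.
  - destruct (valid_adj _ _ Hw). intuition (subst; auto).
  - destruct Hw as [Hxw Hw]. destruct Hz as [<-|Hz].
    + apply (valid_adj _ _ Hxw).
    + apply (IH w Hw). simpl. auto.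
Qed.

Lemma LB x l y : walk G x l y -> exists z, In z (x :: l ++ [y]) /\ le (fst z) (fst x) /\ le (fst z) (fst y).
Proof.
  revert x; induction l as [|w l IH]; intros x Hw; simpl in *.
  - destruct (F1 _ _ Hw) as [E|[[L E]|[L E]]].
    + exists x; split; auto. rewrite E; split; apply le_refl.
    + exists y; split; auto. rewrite E; split; [apply le_tail|apply le_refl].
    + exists x; split; auto. rewrite E; split; [apply le_refl|apply le_tail].
  - destruct Hw as [Hxw Hw]. destruct (IH w Hw) as [z [Hz [Hzw Hzy]]].
    destruct (F1 _ _ Hxw) as [E|[[L E]|[L E]]].
    + exists z; simpl in Hz; split; [simpl; auto|]. rewrite E; auto.
    + exists z; simpl in Hz; split; [simpl; auto|]. rewrite E. split; auto.
      eapply le_trans; [apply Hzw|apply le_tail].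
    + assert (Hxw' : le (fst x) (fst w)) by (rewrite E; apply le_tail).
      destruct (le_comp _ _ _ Hzw Hxw') as [H|H].
      * exists z; simpl in Hz; split; [simpl; auto|]; auto.
      * exists x; split; [simpl; auto|]. split; [apply le_refl|]. eapply le_trans; eauto.
Qed.

Definition vertsAt (s : list layer) : list V :=
  match s with [] => [] | L :: _ => map (fun a => (s, a)) (seq 0 (fst (fst L))) end.

Fixpoint suffixes {A} (l : list A) : list (list A) :=
  match l with [] => [[]] | x :: l' => l :: suffixes l' end.

Lemma suffixes_le {A} (s t : list A) : le s t -> In s (suffixes t).
Proof.
  revert s; induction t as [|x t IH]; intros s Hs.
  - destruct Hs as [p Hp]. destruct p; destruct s; simpl in *; try discriminate; auto.
  - apply le_cons_inv in Hs. destruct Hs as [->|Hs]; simpl; auto.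
Qed.

Lemma In_vertsAt u : valid u -> In u (vertsAt (fst u)).
Proof.
  destruct u as [s a]; unfold valid; simpl. destruct s as [|L s]; [contradiction|].
  intros H. simpl. apply in_map_iff. exists a; split; auto. apply in_seq; lia.
Qed.

Definition Yset (t0 : list layer) : list V := flat_map vertsAt (suffixes t0).

Lemma In_Y t0 u : le (fst u) t0 -> valid u -> In u (Yset t0).
Proof.
  intros H1 H2. unfold Yset. apply in_flat_map. exists (fst u); split.
  - apply suffixes_le; auto.
  - apply In_vertsAt; auto.
Qed.

Lemma FIN (Y : list V) (S : nat -> list V) N :
  (forall i j v, N <= i -> N <= j -> i <> j -> In v (S i) -> In v (S j) -> False) ->
  exists k, N <= k /\ forall v, In v (S k) -> ~ In v Y.
Proof.
  intros Hd. apply NNPP; intros Hn.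
  assert (Hall : forall k, N <= k -> exists v, In v (S k) /\ In v Y).
  { intros k Hk. apply NNPP; intros Hv. apply Hn. exists k; split; auto.
    intros v H1 H2; apply Hv; eauto. }
  assert (Hl : forall n, exists l, NoDup l /\ incl l Y /\ length l = n /\
     forall v, In v l -> exists k, N <= k < N + n /\ In v (S k)).
  { induction n as [|n [l [H1 [H2 [H3 H4]]]]].
    - exists []; split; [constructor|split; [intros a []|split; [reflexivity|intros v []]]].
    - destruct (Hall (N + n)) as [v [Hv1 Hv2]]; [lia|].
      exists (v :: l); repeat split.
      + constructor; auto. intros Hin. destruct (H4 v Hin) as [k [Hk1 Hk2]].
        apply (Hd k (N + n) v); auto; lia.
      + intros a [<-|Ha]; auto.
      + simpl; lia.
      + intros a [<-|Ha]. exists (N + n); split; auto; lia.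
        destruct (H4 a Ha) as [k [Hk1 Hk2]]; exists k; split; auto; lia. }
  destruct (Hl (Datatypes.S (length Y))) as [l [H1 [H2 [H3 _]]]].
  pose proof (NoDup_incl_length H1 H2). lia.
Qed.

Lemma step4 {A} (s a b t : list A) l1 l2 :
  le s a -> le s b -> le (l1 :: t) a -> le (l2 :: t) b -> l1 <> l2 -> le s t.
Proof.
  intros Ha Hb H1 H2 Hne.
  assert (Hc : le (l1 :: t) b -> False).
  { intros H. destruct (le_comp _ _ _ H H2) as [H'|H'].
    - apply le_len_eq in H'; [injection H'; auto|simpl; auto].
    - apply le_len_eq in H'; [injection H'; auto|simpl; auto]. }
  destruct (le_comp _ _ _ Ha H1) as [H|H].
  - apply le_cons_inv in H. destruct H as [->|H]; auto. exfalso; auto.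
  - exfalso. apply Hc. eapply le_trans; eauto.
Qed.

Lemma GOOD (b0 bj : V) P : walk G b0 P bj ->
  (forall v, In v (P ++ [bj]) -> ~ In v (Yset (fst b0))) ->
  exists l c, fst c = l :: fst b0 /\ valid c /\ In c (P ++ [bj]) /\ le (l :: fst b0) (fst bj).
Proof.
  intros Hw HY. destruct P as [|c P'].
  - simpl in Hw. destruct (valid_adj _ _ Hw) as [_ Hv].
    destruct (F1 _ _ Hw) as [E|[[L E]|[L E]]].
    + exfalso. apply (HY bj); simpl; auto. apply In_Y; auto. rewrite E; apply le_refl.
    + exfalso. apply (HY bj); simpl; auto. apply In_Y; auto. rewrite E; apply le_tail.
    + exists L, bj. repeat split; simpl; auto. rewrite E; apply le_refl.
  - simpl in Hw. destruct Hw as [Hc Hw]. destruct (valid_adj _ _ Hc) as [_ Hv].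
    destruct (F1 _ _ Hc) as [E|[[L E]|[L E]]].
    + exfalso. apply (HY c); simpl; auto. apply In_Y; auto. rewrite E; apply le_refl.
    + exfalso. apply (HY c); simpl; auto. apply In_Y; auto. rewrite E; apply le_tail.
    + exists L, c. repeat split; simpl; auto.
      destruct (LB _ _ _ Hw) as [z [Hz [Hzc Hzb]]].
      rewrite E in Hzc. apply le_cons_inv in Hzc. destruct Hzc as [Ez|Hzt].
      * rewrite <- Ez; auto.
      * exfalso. apply (HY z); [exact Hz|]. apply In_Y; auto.
        eapply walk_valid; eauto.
Qed.

Lemma noTK : ~ has_TK_aleph0 G.
Proof.
  intros [b [P [Hb [Hw Hd]]]]. simpl in *.
  set (t0 := fst (b 0)). set (Y := Yset t0).
  set (S1 := fun k => b k :: P 0 k).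
  assert (D1 : forall i j v, 1 <= i -> 1 <= j -> i <> j -> In v (S1 i) -> In v (S1 j) -> False).
  { intros i j v Hi Hj Hij Hvi Hvj. unfold S1 in *; simpl in *.
    destruct Hvi as [Ei|Hvi]; destruct Hvj as [Ej|Hvj].
    - subst. apply Hij, Hb; auto.
    - destruct (Hw 0 j ltac:(lia)) as [_ [_ Hin]]. apply (Hin v i Hvj); auto.
    - destruct (Hw 0 i ltac:(lia)) as [_ [_ Hin]]. apply (Hin v j Hvi); auto.
    - apply (Hd 0 i 0 j v); auto; try lia. intros E; injection E; auto. }
  destruct (FIN Y S1 1 D1) as [j0 [Hj0 HY0]].
  destruct (Hw 0 j0 ltac:(lia)) as [Hw0 _].
  destruct (GOOD _ _ _ Hw0) as [l0 [c0 [_ [_ [_ Hl0]]]]].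
  { intros v Hv. apply HY0. unfold S1. apply in_app_or in Hv. simpl in *.
    destruct Hv as [Hv|[<-|[]]]; auto. }
  set (Z := vertsAt (l0 :: t0)).
  set (S2 := fun k => S1 k ++ P j0 k).
  assert (D2 : forall i j v, Datatypes.S j0 <= i -> Datatypes.S j0 <= j -> i <> j ->
                 In v (S2 i) -> In v (S2 j) -> False).
  { intros i j v Hi Hj Hij Hvi Hvj. unfold S2 in *.
    apply in_app_or in Hvi; apply in_app_or in Hvj.
    destruct Hvi as [Hvi|Hvi]; destruct Hvj as [Hvj|Hvj].
    - apply (D1 i j v); auto; lia.
    - unfold S1 in Hvi; simpl in Hvi. destruct Hvi as [Ei|Hvi].
      + destruct (Hw j0 j ltac:(lia)) as [_ [_ Hin]]. apply (Hin v i Hvj); auto.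
      + apply (Hd 0 i j0 j v); auto; try lia. intros E; injection E; lia.
    - unfold S1 in Hvj; simpl in Hvj. destruct Hvj as [Ej|Hvj].
      + destruct (Hw j0 i ltac:(lia)) as [_ [_ Hin]]. apply (Hin v j Hvi); auto.
      + apply (Hd j0 i 0 j v); auto; try lia. intros E; injection E; lia.
    - apply (Hd j0 i j0 j v); auto; try lia. intros E; injection E; lia. }
  destruct (FIN (Y ++ Z) S2 (Datatypes.S j0) D2) as [k [Hk HYk]].
  destruct (Hw 0 k ltac:(lia)) as [Hwk _].
  destruct (GOOD _ _ _ Hwk) as [l [c [Ec [Vc [Inc Hl]]]]].
  { intros v Hv HvY. apply (HYk v); [|apply in_or_app; auto].
    unfold S2, S1. apply in_or_app; left. apply in_app_or in Hv. simpl in *.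
    destruct Hv as [Hv|[<-|[]]]; auto. }
  assert (Hcs : In c (S2 k)).
  { unfold S2, S1. apply in_or_app; left. apply in_app_or in Inc. simpl in *.
    destruct Inc as [Hv|[<-|[]]]; auto. }
  assert (Hne : l <> l0).
  { intros ->. apply (HYk c Hcs). apply in_or_app; right. unfold Z, t0.
    rewrite <- Ec. apply In_vertsAt; auto. }
  destruct (Hw j0 k ltac:(lia)) as [Hwjk _].
  destruct (LB _ _ _ Hwjk) as [z [Hz [Hz1 Hz2]]]. idtac.
  assert (Hzt : le (fst z) t0) by (apply (step4 _ _ _ _ _ _ Hz1 Hz2 Hl0 Hl); auto).
  assert (HzY : In z Y) by (apply In_Y; auto; eapply walk_valid; eauto).
  simpl in Hz. destruct Hz as [<-|Hz].
  - apply (HY0 (b j0)); unfold S1; simpl; auto.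
  - apply in_app_or in Hz. destruct Hz as [Hz|[<-|[]]].
    + apply (HYk z); [unfold S2; apply in_or_app; auto|apply in_or_app; auto].
    + apply (HYk (b k)); [unfold S2, S1; simpl; auto|apply in_or_app; auto].
Qed.

Record data (H : graph) := mkData {
  hh : vert H -> nat;
  Ls : nat -> list (vert H);
  eqd : forall x y : vert H, {x = y} + {x <> y};
  adjb : vert H -> vert H -> bool }.
Arguments hh {H}. Arguments Ls {H}. Arguments eqd {H}. Arguments adjb {H}.

Definition spec (H : graph) (D : data H) : Prop :=
  (forall x y, adjb D x y = true <-> adj H x y) /\
  (forall x y, adj H x y -> hh D y <= S (hh D x)) /\
  (forall x n, hh D x = n -> In x (Ls D n)).

Fixpoint idx {X} (eq : forall x y : X, {x = y} + {x <> y}) (x : X) (l : list X) : nat :=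
  match l with [] => 0 | y :: l' => if eq x y then 0 else S (idx eq x l') end.

Lemma idx_spec {X} eq (x : X) l : In x l -> nth_error l (idx eq x l) = Some x.
Proof.
  induction l as [|y l IH]; simpl; intros Hin; [contradiction|].
  destruct (eq x y) as [->|Hne]; auto. destruct Hin as [->|Hin]; [congruence|auto].
Qed.

Definition EE {H} (D : data H) (n : nat) : list (vert H) :=
  nodup (eqd D) (filter (fun x => Nat.eqb (hh D x) n) (Ls D n)).

Definition pos {H} (D : data H) x := idx (eqd D) x (EE D (hh D x)).

Definition adjo {H} (D : data H) (o1 o2 : option (vert H)) : bool :=
  match o1, o2 with Some u, Some v => adjb D u v | _, _ => false end.

Definition pairs a b := list_prod (seq 0 a) (seq 0 b).

Definition intra {H} (D : data H) n : list (nat * nat) :=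
  filter (fun p => adjo D (nth_error (EE D n) (fst p)) (nth_error (EE D n) (snd p)))
    (pairs (length (EE D n)) (length (EE D n))).

Definition down {H} (D : data H) n : list (nat * nat) :=
  match n with
  | 0 => []
  | S m => filter (fun p => adjo D (nth_error (EE D n) (fst p)) (nth_error (EE D m) (snd p)))
    (pairs (length (EE D n)) (length (EE D m)))
  end.

Definition lay {H} (D : data H) n : layer := ((length (EE D n), intra D n), down D n).

Fixpoint nodes {H} (D : data H) n : list layer :=
  match n with 0 => [lay D 0] | S m => lay D (S m) :: nodes D m end.

Lemma nodes_eq {H} (D : data H) n : nodes D n = lay D n :: match n with 0 => [] | S m => nodes D m end.
Proof. destruct n; reflexivity. Qed.

Lemma nodes_len {H} (D : data H) n : length (nodes D n) = S n.
Proof. induction n; simpl; auto. Qed.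

Lemma nodes_inj {H} (D : data H) n m : nodes D n = nodes D m -> n = m.
Proof. intros E. apply (f_equal (@length _)) in E. rewrite !nodes_len in E. lia. Qed.

Definition phi {H} (D : data H) (x : vert H) : V := (nodes D (hh D x), pos D x).

Lemma EE_In {H} (D : data H) n x : In x (EE D n) <-> (hh D x = n /\ In x (Ls D n)).
Proof.
  unfold EE. rewrite nodup_In, filter_In, Nat.eqb_eq. tauto.
Qed.

Lemma pos_spec {H} (D : data H) x : spec H D -> nth_error (EE D (hh D x)) (pos D x) = Some x.
Proof.
  intros [_ [_ HL]]. apply idx_spec. apply EE_In; auto.
Qed.

Lemma pos_lt {H} (D : data H) x : spec H D -> pos D x < length (EE D (hh D x)).
Proof.
  intros Hs. apply nth_error_Some. rewrite (pos_spec D x Hs). discriminate.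
Qed.

Lemma in_pairs a b p : In p (pairs a b) <-> fst p < a /\ snd p < b.
Proof.
  destruct p; unfold pairs. rewrite in_prod_iff, !in_seq. simpl. lia.
Qed.

Lemma phi_inj {H} (D : data H) : spec H D -> forall x y, phi D x = phi D y -> x = y.
Proof.
  intros Hs x y E. unfold phi in E. injection E; intros E2 E1.
  apply nodes_inj in E1. pose proof (pos_spec D x Hs) as Hx. pose proof (pos_spec D y Hs) as Hy.
  rewrite E1, E2, Hy in Hx. congruence.
Qed.

Lemma Rback {H} (D : data H) : spec H D -> forall x y, R (phi D x) (phi D y) -> adj H x y.
Proof.
  intros Hs x y. unfold R, phi; simpl. rewrite nodes_eq. intros [_ [[E [_ Hin]]|[_ [E Hin]]]].
  - rewrite <- nodes_eq in E. apply nodes_inj in E. simpl in Hin. unfold intra in Hin.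
    apply filter_In in Hin. destruct Hin as [_ Ha]. simpl in Ha.
    rewrite (pos_spec D x Hs), <- E, (pos_spec D y Hs) in Ha. simpl in Ha.
    apply (proj1 Hs); auto.
  - simpl in Hin. destruct (hh D x) as [|m] eqn:Ex.
    + pose proof (nodes_len D (hh D y)). rewrite E in H0. discriminate.
    + apply nodes_inj in E. unfold down in Hin. apply filter_In in Hin. destruct Hin as [_ Ha].
      simpl in Ha. rewrite <- Ex, (pos_spec D x Hs), <- E, (pos_spec D y Hs) in Ha. simpl in Ha.
      apply (proj1 Hs); auto.
Qed.

Lemma pos_spec' {H} (D : data H) x n : spec H D -> hh D x = n -> nth_error (EE D n) (pos D x) = Some x.
Proof. intros Hs <-. apply pos_spec; auto. Qed.

Lemma pos_lt' {H} (D : data H) x n : spec H D -> hh D x = n -> pos D x < length (EE D n).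
Proof. intros Hs <-. apply pos_lt; auto. Qed.

Lemma intra_mem {H} (D : data H) x y n : spec H D -> hh D x = n -> hh D y = n -> adj H x y ->
  In (pos D x, pos D y) (intra D n).
Proof.
  intros Hs Ex Ey Hxy. unfold intra. apply filter_In. split.
  - apply in_pairs; simpl. split; eapply pos_lt'; eauto.
  - simpl. rewrite (pos_spec' D x n Hs Ex), (pos_spec' D y n Hs Ey). simpl. apply (proj1 Hs); auto.
Qed.

Lemma down_mem {H} (D : data H) x y m : spec H D -> hh D x = S m -> hh D y = m -> adj H x y ->
  In (pos D x, pos D y) (down D (S m)).
Proof.
  intros Hs Ex Ey Hxy. unfold down. apply filter_In. split.
  - apply in_pairs; simpl. split; eapply pos_lt'; eauto.
  - simpl. rewrite (pos_spec' D x _ Hs Ex), (pos_spec' D y m Hs Ey). simpl. apply (proj1 Hs); auto.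
Qed.

Lemma Rfwd_same {H} (D : data H) x y : spec H D -> hh D x = hh D y -> adj H x y -> R (phi D x) (phi D y).
Proof.
  intros Hs E Hxy. unfold R, phi; simpl. rewrite nodes_eq. simpl. split; [apply pos_lt; auto|].
  left. rewrite <- nodes_eq, E. split; auto. split. apply pos_lt'; auto.
  apply intra_mem; auto.
Qed.

Lemma Rfwd_down {H} (D : data H) x y : spec H D -> hh D x = S (hh D y) -> adj H x y -> R (phi D x) (phi D y).
Proof.
  intros Hs E Hxy. unfold R, phi; simpl. rewrite nodes_eq. simpl. split; [apply pos_lt; auto|].
  right. split; [|split].
  - unfold valid, phi; simpl. rewrite nodes_eq. simpl. apply pos_lt; auto.
  - rewrite E. reflexivity.
  - simpl. rewrite E. apply down_mem; auto.
Qed.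

Lemma embed (H : graph) (D : data H) : spec H D -> induced_subgraph_of H G.
Proof.
  intros Hs. exists (phi D). split; [apply phi_inj; auto|].
  intros x y. split.
  - intros Hxy. split.
    + intros E. apply phi_inj in E; auto. subst. apply (adj_irrefl H y); auto.
    + pose proof (proj1 (proj2 Hs) _ _ Hxy) as H1. pose proof (proj1 (proj2 Hs) _ _ (adj_sym H _ _ Hxy)) as H2.
      assert (Hc : hh D x = hh D y \/ hh D x = S (hh D y) \/ hh D y = S (hh D x)) by lia.
      destruct Hc as [Ec|[Ec|Ec]].
      * left. apply Rfwd_same; auto.
      * left. apply Rfwd_down; auto.
      * right. apply Rfwd_down; auto. apply adj_sym; auto.
  - intros [_ [Hr|Hr]]. apply (Rback D); auto. apply (adj_sym H). apply (Rback D) in Hr; auto.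
Qed.

Inductive reach (H : graph) : nat -> vert H -> vert H -> Prop :=
| r0 r y : reach H r y y
| rS r y z x : reach H r y z -> adj H z x -> reach H (S r) y x.

Lemma union_list {A B} (P : A -> B -> Prop) (l : list A) :
  (forall a, exists lb, forall b, P a b -> In b lb) ->
  exists L, forall a b, In a l -> P a b -> In b L.
Proof.
  intros Hp. induction l as [|a l [L HL]].
  - exists []; intros a b [].
  - destruct (Hp a) as [lb Hlb]. exists (lb ++ L). intros a' b [<-|Ha] Hab; apply in_or_app; eauto.
Qed.

Lemma balls (H : graph) : locally_finite H -> forall r y, exists l, forall r' x, r' <= r -> reach H r' y x -> In x l.
Proof.
  intros HL. induction r as [|r IH]; intros y.
  - exists [y]. intros r' x Hr Hx. inversion Hx; subst; simpl; auto. lia.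
  - destruct (IH y) as [l Hl]. destruct (union_list (adj H) l HL) as [L HLL].
    exists (y :: l ++ L). intros r' x Hr Hx. inversion Hx; subst; simpl; auto.
    right; apply in_or_app; right. eapply HLL; [|eauto]. eapply Hl; [|eauto]. lia.
Qed.

Lemma small_index (H : graph) (f : vert H -> nat) :
  (forall x y, f x = f y -> x = y) -> forall n, exists l, forall y, f y < n -> In y l.
Proof.
  intros Hf n. induction n as [|n [l Hl]].
  - exists []; intros; lia.
  - destruct (classic (exists y0, f y0 = n)) as [[y0 Hy0]|Hno].
    + exists (y0 :: l). intros y Hy. destruct (Nat.eq_dec (f y) n) as [E|E].
      * left; apply Hf; congruence.
      * right; apply Hl; lia.
    + exists l. intros y Hy. apply Hl. destruct (Nat.eq_dec (f y) n) as [E|E]; [exfalso; eauto|lia].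
Qed.

Definition Pp (H : graph) (f : vert H -> nat) x n := exists y r, f y + r <= n /\ reach H r y x.

Lemma least_ex (H : graph) (f : vert H -> nat) x :
  exists n, Pp H f x n /\ forall m, Pp H f x m -> n <= m.
Proof.
  destruct (dec_inh_nat_subset_has_unique_least_element (Pp H f x)) as [n [[H1 H2] _]].
  - intros n; apply classic.
  - exists (f x), x, 0. split; [lia|constructor].
  - exists n; split; auto.
Qed.

Lemma universal (H : graph) : locally_finite H -> induced_subgraph_of H G.
Proof.
  intros HL. destruct (vert_countable H) as [f Hf].
  set (h := fun x => proj1_sig (constructive_indefinite_description _ (least_ex H f x))).
  assert (Hh : forall x, Pp H f x (h x) /\ forall m, Pp H f x m -> h x <= m).
  { intros x. unfold h. destruct (constructive_indefinite_description _ _) as [n Hn]; auto. }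
  assert (Hfin : forall n, exists l, forall x, h x = n -> In x l).
  { intros n. destruct (small_index H f Hf (S n)) as [ly Hly].
    destruct (union_list (fun y x => exists r, r <= n /\ reach H r y x) ly) as [L HLL].
    { intros y. destruct (balls H HL n y) as [l Hl]. exists l. intros b [r [Hr Hb]]. eapply Hl; eauto. }
    exists L. intros x Hx. destruct (proj1 (Hh x)) as [y [r [H1 H2]]].
    apply (HLL y); [apply Hly; lia|]. exists r; split; [lia|auto]. }
  set (Ls0 := fun n => proj1_sig (constructive_indefinite_description _ (Hfin n))).
  set (D := mkData H h Ls0 (fun x y => excluded_middle_informative (x = y))
        (fun x y => if excluded_middle_informative (adj H x y) then true else false)).
  apply (embed H D). split; [|split].
  - intros x y; simpl. destruct (excluded_middle_informative _); split; auto; discriminate.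
  - intros x y Hxy; simpl. apply (proj2 (Hh y)). destruct (proj1 (Hh x)) as [z [r [H1 H2]]].
    exists z, (S r). split; [lia|econstructor; eauto].
  - intros x n Hx; simpl. unfold Ls0. destruct (constructive_indefinite_description _ _) as [l Hl]; simpl; auto.
Qed.

Theorem mainTheorem19 :
  exists G : graph,
    (forall H : graph, locally_finite H -> induced_subgraph_of H G) /\
    ~ has_TK_aleph0 G.
Proof.
  exists G. split; [exact universal|exact noTK].
Qed.
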